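(* Let $V$ be a finite dimensional normed vector space, $H\le O(V)$, and $(V,H,L_i)$ holonomic spaces whose holonomic metrics $d_{L_i}$ converge uniformly on compact sets to a semi-metric $d_\infty$. Suppose there is $c>0$ with $c\le\mathrm{HolRad}_i(0)$ for all $i$, where $\mathrm{HolRad}_i(0)$ is the holonomy radius at $0$ of $(V,H,L_i)$. Then $d_\infty$ is nondegenerate, i.e. a metric.
   Context: $O(V)$: norm-preserving linear maps. Group-norm on $H$: $L\ge0$, $L(a)=0$ iff $a=e$, $L(a^{-1})=L(a)$, $L(ab)\le L(a)+L(b)$. Holonomic space $(V,H,L)$: $H\le O(V)$, $L$ a group-norm, such that for every $u$ there is $R>0$ with $\|v-w\|^2-\|av-w\|^2\le L(a)^2$ for all $a\in H$ and $\|u-v\|,\|u-w\|<R$; holonomic metric $d_L(u,v)=\inf_{a\in H}\sqrt{L(a)^2+\|au-v\|^2}$. Holonomy radius at $u$: the supremum of $R>0$ such that $d_L(v,w)=\|v-w\|$ for all $v,w$ in the norm ball of radius $R$ about $u$. *)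

(* Defs.v *)
From Stdlib Require Import Reals Lra List Classical ClassicalEpsilon FunctionalExtensionality.
From Stdlib Require Vectors.Fin.
Open Scope R_scope.

(* A finite dimensional real normed space is modelled (up to linear isometry)
   as R^n = (Fin.t n -> R) equipped with an arbitrary norm N. *)
Definition vec (n : nat) : Type := Fin.t n -> R.

Definition vzero {n} : vec n := fun _ => 0.
Definition vadd {n} (u v : vec n) : vec n := fun k => u k + v k.
Definition vscale {n} (a : R) (u : vec n) : vec n := fun k => a * u k.
Definition vsub {n} (u v : vec n) : vec n := fun k => u k - v k.

Definition is_norm {n} (N : vec n -> R) : Prop :=
  (forall x, 0 <= N x) /\
  (forall x, N x = 0 -> x = vzero) /\
  (forall a x, N (vscale a x) = Rabs a * N x) /\
  (forall x y, N (vadd x y) <= N x + N y).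

Definition is_linear {n} (f : vec n -> vec n) : Prop :=
  (forall u v, f (vadd u v) = vadd (f u) (f v)) /\
  (forall a u, f (vscale a u) = vscale a (f u)).

Definition in_O {n} (N : vec n -> R) (f : vec n -> vec n) : Prop :=
  is_linear f /\ forall v, N (f v) = N v.

Definition subgroup_O {n} (N : vec n -> R) (H : (vec n -> vec n) -> Prop) : Prop :=
  (forall a, H a -> in_O N a) /\
  H (fun v => v) /\
  (forall a b, H a -> H b -> H (fun v => a (b v))) /\
  (forall a, H a -> exists b, H b /\ (forall v, b (a v) = v) /\ (forall v, a (b v) = v)).

Definition group_norm {n} (H : (vec n -> vec n) -> Prop) (L : (vec n -> vec n) -> R) : Prop :=
  (forall a, H a -> 0 <= L a) /\
  (forall a, H a -> (L a = 0 <-> a = (fun v => v))) /\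
  (forall a b, H a -> H b -> (forall v, b (a v) = v) -> (forall v, a (b v) = v) -> L b = L a) /\
  (forall a b, H a -> H b -> L (fun v => a (b v)) <= L a + L b).

Definition holonomic {n} (N : vec n -> R) (H : (vec n -> vec n) -> Prop)
  (L : (vec n -> vec n) -> R) : Prop :=
  subgroup_O N H /\ group_norm H L /\
  forall u : vec n, exists R0, 0 < R0 /\
    forall a v w, H a -> N (vsub u v) < R0 -> N (vsub u w) < R0 ->
      (N (vsub v w))^2 - (N (vsub (a v) w))^2 <= (L a)^2.

Definition is_lower_bound (E : R -> Prop) (m : R) : Prop := forall x, E x -> m <= x.
Definition is_glb (E : R -> Prop) (m : R) : Prop :=
  is_lower_bound E m /\ (forall b, is_lower_bound E b -> b <= m).
Definition infR (E : R -> Prop) : R := epsilon (inhabits 0) (fun m => is_glb E m).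

Definition holonomic_metric {n} (N : vec n -> R) (H : (vec n -> vec n) -> Prop)
  (L : (vec n -> vec n) -> R) (u v : vec n) : R :=
  infR (fun r => exists a, H a /\ r = sqrt ((L a)^2 + (N (vsub (a u) v))^2)).

(* c <= HolRad(u), where HolRad(u) = sup of the R > 0 such that
   d_L(v,w) = ||v - w|| on the ball of radius R about u (sup possibly +oo):
   every r < c is exceeded by an element of that set. *)
Definition holrad_ge {n} (N : vec n -> R) (H : (vec n -> vec n) -> Prop)
  (L : (vec n -> vec n) -> R) (u : vec n) (c : R) : Prop :=
  forall r, r < c -> exists R0, r < R0 /\ 0 < R0 /\
    forall v w, N (vsub u v) < R0 -> N (vsub u w) < R0 ->
      holonomic_metric N H L v w = N (vsub v w).

Definition semi_metric {n} (d : vec n -> vec n -> R) : Prop :=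
  (forall x y, 0 <= d x y) /\ (forall x, d x x = 0) /\
  (forall x y, d x y = d y x) /\ (forall x y z, d x z <= d x y + d y z).

Definition open_VV {n} (N : vec n -> R) (U : vec n * vec n -> Prop) : Prop :=
  forall p, U p -> exists e, 0 < e /\ forall q,
    Rmax (N (vsub (fst q) (fst p))) (N (vsub (snd q) (snd p))) < e -> U q.

Definition compact_VV {n} (N : vec n -> R) (K : vec n * vec n -> Prop) : Prop :=
  forall (I : Type) (U : I -> vec n * vec n -> Prop),
    (forall i, open_VV N (U i)) ->
    (forall p, K p -> exists i, U i p) ->
    exists l : list I, forall p, K p -> exists i, In i l /\ U i p.

Definition unif_conv_compacts {n} (N : vec n -> R) (d : nat -> vec n -> vec n -> R)
  (dinf : vec n -> vec n -> R) : Prop :=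
  forall K, compact_VV N K -> forall eps, 0 < eps -> exists i0, forall i, (i0 <= i)%nat ->
    forall p, K p -> Rabs (d i (fst p) (snd p) - dinf (fst p) (snd p)) < eps.

(* Main.v *)
Require Import Defs.
From Stdlib Require Import Reals Lra Classical ClassicalEpsilon FunctionalExtensionality.
Open Scope R_scope.

Lemma glb_exists (E : R -> Prop) : (exists x, E x) -> is_lower_bound E 0 ->
  exists m, is_glb E m.
Proof.
  intros [x0 Hx0] Hlb.
  set (E' := fun y => E (- y)).
  assert (Hb : bound E').
  { exists 0. intros y Hy. unfold E' in Hy. specialize (Hlb _ Hy). lra. }
  assert (Hne : exists y, E' y). { exists (- x0). unfold E'. rewrite Ropp_involutive. exact Hx0. }
  destruct (completeness E' Hb Hne) as [m [Hub Hl]].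
  exists (- m). split.
  - intros x Hx. assert (E' (- x)) by (unfold E'; rewrite Ropp_involutive; exact Hx).
    specialize (Hub _ H). lra.
  - intros b Hbd. assert (m <= - b).
    { apply Hl. intros y Hy. specialize (Hbd _ Hy). lra. }
    lra.
Qed.

Lemma infR_glb (E : R -> Prop) : (exists x, E x) -> is_lower_bound E 0 ->
  is_glb E (infR E).
Proof.
  intros H1 H2. unfold infR. apply epsilon_spec. apply glb_exists; auto.
Qed.

Lemma le_sqrt z w : 0 <= z -> z ^ 2 <= w -> z <= sqrt w.
Proof.
  intros Hz Hw. rewrite <- (sqrt_pow2 z Hz). apply sqrt_le_1_alt. exact Hw.
Qed.

Lemma metric_glb n (N : vec n -> R) H L u v :
  subgroup_O N H -> is_glb (fun r => exists a, H a /\ r = sqrt ((L a)^2 + (N (vsub (a u) v))^2))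
    (holonomic_metric N H L u v).
Proof.
  intros [_ [Hid _]]. unfold holonomic_metric. apply infR_glb.
  - eexists; exists (fun v => v); split; [exact Hid | reflexivity].
  - intros r [a [_ ->]]. apply sqrt_pos.
Qed.

Theorem mainTheorem16 (n : nat) (N : vec n -> R) (H : (vec n -> vec n) -> Prop)
  (L : nat -> (vec n -> vec n) -> R) (dinf : vec n -> vec n -> R) (c : R) :
  is_norm N ->
  subgroup_O N H ->
  (forall i, holonomic N H (L i)) ->
  unif_conv_compacts N (fun i => holonomic_metric N H (L i)) dinf ->
  semi_metric dinf ->
  0 < c ->
  (forall i, holrad_ge N H (L i) vzero c) ->
  forall x y, dinf x y = 0 -> x = y.
Proof.
  intros Hn Hsg Hhol Hconv Hsm Hc Hrad x y Hd.
  destruct Hn as [Npos [Ndef [Nsc Ntri]]].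
  destruct (classic (x = y)) as [E|Hne]; [exact E|exfalso].
  set (D := N (vsub x y)).
  assert (HD : 0 < D).
  { destruct (Npos (vsub x y)) as [h|h]; [exact h|].
    exfalso; apply Hne. symmetry in h. apply Ndef in h.
    apply functional_extensionality; intro k.
    assert (vsub x y k = vzero k) by (rewrite h; reflexivity).
    unfold vsub, vzero in H0. lra. }
  assert (Nx := Npos x).
  set (s := c / (2 * (N x + 1))).
  assert (Hs : 0 < s) by (unfold s; apply Rdiv_lt_0_compat; lra).
  assert (HNv : N (vscale s x) < c / 2).
  { rewrite Nsc, Rabs_right by lra. unfold s.
    apply Rmult_lt_reg_r with (2 * (N x + 1)); [lra|].
    field_simplify; lra. }
  assert (N0 : N vzero = 0).
  { replace (@vzero n) with (vscale 0 (@vzero n)) by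
      (apply functional_extensionality; intro; unfold vscale, vzero; ring).
    rewrite Nsc, Rabs_R0; ring. }
  assert (Nneg : forall z, N (vsub vzero z) = N z).
  { intro z. replace (vsub vzero z) with (vscale (-1) z) by
      (apply functional_extensionality; intro; unfold vscale, vsub, vzero; ring).
    rewrite Nsc. rewrite Rabs_left by lra. ring. }
  set (kap := s * D / (1 + s)).
  assert (Hkap : 0 < kap) by (unfold kap; apply Rdiv_lt_0_compat; nra).
  assert (Hlow : forall i, kap <= holonomic_metric N H (L i) x y).
  { intro i.
    destruct (Hrad i (c / 2) ltac:(lra)) as [R0 [HR0 [_ HR]]].
    destruct (Hhol i) as [_ [[Lpos _] _]].
    assert (HL : forall a, H a -> s * N (vsub x (a x)) <= L i a).
    { intros a Ha.
      destruct (proj1 Hsg a Ha) as [[_ Hlin] Hiso].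
      set (v := vscale s x).
      assert (Heq : holonomic_metric N H (L i) v (a v) = N (vsub v (a v))).
      { apply HR; rewrite Nneg; [|rewrite Hiso]; unfold v; lra. }
      destruct (metric_glb n N H (L i) v (a v) Hsg) as [Hlb _].
      assert (Hle := Hlb _ (ex_intro _ a (conj Ha eq_refl))).
      rewrite Heq in Hle.
      replace (vsub (a v) (a v)) with (@vzero n) in Hle by
        (apply functional_extensionality; intro; unfold vsub, vzero; ring).
      rewrite N0 in Hle.
      replace ((L i a) ^ 2 + 0 ^ 2) with ((L i a) ^ 2) in Hle by ring.
      rewrite sqrt_pow2 in Hle by (apply Lpos; exact Ha).
      replace (vsub v (a v)) with (vscale s (vsub x (a x))) in Hle.
      - rewrite Nsc, Rabs_right in Hle by lra. exact Hle.
      - unfold v. rewrite Hlin. apply functional_extensionality; intro;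
          unfold vscale, vsub; ring. }
    destruct (metric_glb n N H (L i) x y Hsg) as [_ Hgl].
    apply Hgl. intros r [a [Ha ->]].
    assert (HLa := HL a Ha). assert (Lp := Lpos a Ha).
    set (t := N (vsub x (a x))) in *.
    assert (Htri : D <= t + N (vsub (a x) y)).
    { unfold D, t. replace (vsub x y) with (vadd (vsub x (a x)) (vsub (a x) y)).
      - apply Ntri.
      - apply functional_extensionality; intro; unfold vadd, vsub; ring. }
    assert (Hm := Npos (vsub (a x) y)).
    assert (Ht := Npos (vsub x (a x))). fold t in Ht.
    destruct (Rle_or_lt (D / (1 + s)) t) as [Hb|Hb].
    - apply Rle_trans with (L i a).
      + apply Rle_trans with (s * t); [|exact HLa].
        unfold kap. replace (s * D / (1 + s)) with (s * (D / (1 + s))) by (field; lra).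
        apply Rmult_le_compat_l; lra.
      + apply le_sqrt; [exact Lp|]. assert (0 <= N (vsub (a x) y) ^ 2) by (apply pow2_ge_0). lra.
    - apply Rle_trans with (N (vsub (a x) y)).
      + assert (kap = D - D / (1 + s)) by (unfold kap; field; lra). lra.
      + apply le_sqrt; [exact Hm|]. assert (0 <= L i a ^ 2) by (apply pow2_ge_0). lra. }
  set (K := fun p : vec n * vec n => p = (x, y)).
  assert (HK : compact_VV N K).
  { intros I U _ Hcov. destruct (Hcov (x, y) eq_refl) as [j Hj].
    exists (cons j nil). intros p Hp. exists j. split; [left; reflexivity|].
    unfold K in Hp; subst p; exact Hj. }
  destruct (Hconv K HK kap Hkap) as [i0 Hi0].
  specialize (Hi0 i0 (le_n _) (x, y) eq_refl). simpl in Hi0.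
  rewrite Hd, Rminus_0_r in Hi0. specialize (Hlow i0).
  assert (Hab := Rle_abs (holonomic_metric N H (L i0) x y)). lra.
Qed.
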